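(* Fix $\phi\in(0,1)$. For $\gamma_1,\gamma_2>0$ let $z_1(\gamma_1,\gamma_2),z_2(\gamma_1,\gamma_2)$ be the two (possibly complex) roots of $z^2-(2-\gamma_1-\gamma_2+\gamma_1\gamma_2\phi)z+(1-\gamma_1)(1-\gamma_2)=0$ and $f(\gamma_1,\gamma_2):=\max\{|z_1(\gamma_1,\gamma_2)|,|z_2(\gamma_1,\gamma_2)|\}$. Then: (1) For each fixed $\gamma_1\in(0,1]$, $\gamma_2\mapsto f(\gamma_1,\gamma_2)$ is non-increasing on $(0,1]$; for each fixed $\gamma_2\in(0,1]$, $\gamma_1\mapsto f(\gamma_1,\gamma_2)$ is non-increasing on $(0,1]$. Hence $\min_{(\gamma_1,\gamma_2)\in(0,1]^2}f(\gamma_1,\gamma_2)=f(1,1)$. (2) For each fixed $\gamma_2\in[1,\infty)$, $\gamma_1\mapsto f(\gamma_1,\gamma_2)$ is non-increasing on $(0,1]$; for each fixed $\gamma_1\in[1,\infty)$, $\gamma_2\mapsto f(\gamma_1,\gamma_2)$ is non-increasing on $(0,1]$. Hence $\min_{(\gamma_1,\gamma_2)\in(0,1]\times[1,\infty)}f=\min_{\gamma_2\ge1}f(1,\gamma_2)$ and $\min_{(\gamma_1,\gamma_2)\in[1,\infty)\times(0,1]}f=\min_{\gamma_1\ge1}f(\gamma_1,1)$. *)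

(* Defs.v *)
From HB Require Import structures.
From mathcomp Require Import all_boot all_order all_algebra.
From mathcomp Require Import complex.
Set Implicit Arguments. Unset Strict Implicit. Unset Printing Implicit Defensive.
Import Order.TTheory GRing.Theory Num.Theory.
Local Open Scope ring_scope.

Section Defs.
Variable R : rcfType.

Definition qb (phi g1 g2 : R) : R := 2 - g1 - g2 + g1 * g2 * phi.
Definition qc (g1 g2 : R) : R := (1 - g1) * (1 - g2).

Definition z1 (phi g1 g2 : R) : R[i] :=
  (((qb phi g1 g2)%:C + sqrtc (((qb phi g1 g2) ^+ 2 - 4 * qc g1 g2)%:C)) / 2%:R)%C.
Definition z2 (phi g1 g2 : R) : R[i] :=
  (((qb phi g1 g2)%:C - sqrtc (((qb phi g1 g2) ^+ 2 - 4 * qc g1 g2)%:C)) / 2%:R)%C.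

Definition fmod (phi g1 g2 : R) : R :=
  Num.max (Normc.normc (z1 phi g1 g2)) (Normc.normc (z2 phi g1 g2)).

End Defs.

(* Main.v *)
Require Import Defs.
From HB Require Import structures.
From mathcomp Require Import all_boot all_order all_algebra.
From mathcomp Require Import complex.
From mathcomp Require Import ring lra.
Import Order.TTheory GRing.Theory Num.Theory.
Local Open Scope ring_scope.

Section Aux.
Variable R : rcfType.

Definition F (b c : R) : R :=
  if 4 * c <= b ^+ 2 then (`|b| + Num.sqrt (b ^+ 2 - 4 * c)) / 2
  else Num.sqrt c.

Lemma maxabs (b x : R) :
  Num.max `|(b + x) / 2| `|(b - x) / 2| = (`|b| + `|x|) / 2.
Proof.
have [hb|hb] := lerP 0 b; have [hx|hx] := lerP 0 x;
have [h1|h1] := lerP 0 ((b + x) / 2); have [h2|h2] := lerP 0 ((b - x) / 2);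
rewrite ?(ger0_norm hb) ?(ltr0_norm hb) ?(ger0_norm hx) ?(ltr0_norm hx)
  ?(ger0_norm h1) ?(ltr0_norm h1) ?(ger0_norm h2) ?(ltr0_norm h2);
case: ltP => h3; lra.
Qed.

Lemma fmodF phi g1 g2 : fmod phi g1 g2 = F (qb phi g1 g2) (qc g1 g2).
Proof.
rewrite /fmod /z1 /z2 /F.
move: (qb phi g1 g2) (qc g1 g2) => b c.
have hs := sqr_sqrtc ((b^+2 - 4*c)%:C)%C.
move: (sqrtc _) hs => [x y] hs.
rewrite expr2 /= in hs; simpc.
case: hs => hx hy.
have e : ((1+1)/((1+1)^+2 + 0^+2) : R) = 1/2.
  by rewrite expr0n /= addr0; field.
rewrite e /Normc.normc !mul1r sqrrN.
have : x * y = 0 by lra.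
move/eqP; rewrite mulf_eq0 => /orP [] /eqP h0; subst.
- rewrite ?addr0 ?subr0 ?add0r ?sub0r ?sqrrN maxxx.
  have [h4|h4] := ifP.
  + have hy0 : y * y = 0 by nra.
    move/eqP: hy0; rewrite mulf_eq0 orbb => /eqP hy0; subst.
    have -> : b ^+ 2 - 4 * c = 0 by lra.
    rewrite sqrtr0 addr0 mul0r expr0n /= addr0 sqrtr_sqr normrM.
    rewrite [`|2^-1|]ger0_norm // invr_ge0 //.
  + have -> : (b / 2) ^+ 2 + (y / 2) ^+ 2 = c by lra.
    done.
- rewrite !mul0r expr0n /= !addr0 !sqrtr_sqr maxabs.
  have h4 : 4 * c <= b ^+ 2 by nra.
  rewrite h4 -hx mulr0 subr0 -expr2 sqrtr_sqr //.
Qed.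

Lemma FA (b c r : R) : 0 <= r -> `|c| <= r ^+ 2 -> `|b| <= 2 * r ->
  `|b| * r <= r ^+ 2 + c -> F b c <= r.
Proof.
move=> hr hc hb hbr; rewrite /F.
have hcc : c <= `|c| := ler_norm c.
have hB : `|b| ^+ 2 = b ^+ 2 by rewrite real_normK ?num_real.
have hB0 : 0 <= `|b| := normr_ge0 b.
have [h4|h4] := ifP.
- have hD : 0 <= b ^+ 2 - 4 * c by lra.
  have hs := sqr_sqrtr hD; have hs0 := sqrtr_ge0 (b ^+ 2 - 4 * c).
  move: hs hs0; set s := Num.sqrt _ => hs hs0.
  have : s <= 2 * r - `|b| by nra.
  lra.
- move/negbT: h4; rewrite -ltNge => h4.
  have hD : 0 <= c by nra.
  have hs := sqr_sqrtr hD; have hs0 := sqrtr_ge0 c.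
  move: hs hs0; set s := Num.sqrt _ => hs hs0.
  nra.
Qed.

Lemma FB (b c : R) : [/\ 0 <= F b c, `|c| <= F b c ^+ 2, `|b| <= 2 * F b c &
  `|b| * F b c <= F b c ^+ 2 + c].
Proof.
rewrite /F.
have hB : `|b| ^+ 2 = b ^+ 2 by rewrite real_normK ?num_real.
have hB0 : 0 <= `|b| := normr_ge0 b.
have [h4|h4] := ifP.
- have hD : 0 <= b ^+ 2 - 4 * c by lra.
  have hs := sqr_sqrtr hD; have hs0 := sqrtr_ge0 (b ^+ 2 - 4 * c).
  move: hs hs0; set s := Num.sqrt _ => hs hs0.
  split; [lra| |lra|nra].
  rewrite ler_norml; apply/andP; split; nra.
- move/negbT: h4; rewrite -ltNge => h4.
  have hD : 0 <= c by nra.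
  have hs := sqr_sqrtr hD; have hs0 := sqrtr_ge0 c.
  move: hs hs0; set s := Num.sqrt _ => hs hs0.
  rewrite ger0_norm //.
  have : `|b| <= 2 * s by nra.
  split; [lra|lra|lra|nra].
Qed.

Lemma FC (b c w : R) : w ^+ 2 - b * w + c <= 0 -> `|w| <= F b c.
Proof.
move=> hp; rewrite /F.
have hb1 : b <= `|b| := ler_norm b.
have hb2 : - b <= `|b| by rewrite -normrN ler_norm.
have [h4|h4] := ifP.
- have hD : 0 <= b ^+ 2 - 4 * c by lra.
  have hs := sqr_sqrtr hD; have hs0 := sqrtr_ge0 (b ^+ 2 - 4 * c).
  move: hs hs0; set s := Num.sqrt _ => hs hs0.
  have h1 : 2 * w - b <= s by nra.
  have h2 : b - 2 * w <= s by nra.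
  rewrite ler_norml; apply/andP; split; lra.
- move/negbT: h4; rewrite -ltNge => h4.
  exfalso; have := sqr_ge0 (2 * w - b); nra.
Qed.

Lemma lin (al be t t' : R) : t <= t' -> t' <= 1 -> al + be * t <= 0 -> al + be <= 0 ->
  al + be * t' <= 0.
Proof.
move=> h3 h4 h1 h2; have [hb|hb] := lerP 0 be; nra.
Qed.

Lemma mono (phi g t t' : R) : 0 <= phi -> phi <= 1 -> 0 <= g ->
  t <= t' -> t' <= 1 -> fmod phi t' g <= fmod phi t g.
Proof.
move=> hp0 hp1 hg htt ht1; rewrite !fmodF.
set r := F (qb phi t g) (qc t g).
have [hr0 hc hb hbr] := FB (qb phi t g) (qc t g); rewrite -/r in hr0 hc hb hbr.
set w := 1 - g + g * phi.
have hw : `|w| <= r.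
  apply: FC; rewrite /qb /qc /w.
  have : 0 <= g * phi * (g * (1 - phi)) * (1 - t) by
    rewrite !mulr_ge0 // ?subr_ge0 //; lra.
  nra.
have hw1 : w <= `|w| := ler_norm w.
have hw2 : - w <= `|w| by rewrite -normrN ler_norm.
move: hw hw1 hw2; rewrite /w => hw hw1 hw2.
apply: FA => //.
- rewrite /qc normrM (ger0_norm (_ : 0 <= 1 - t')); last by lra.
  move: hc; rewrite /qc normrM (ger0_norm (_ : 0 <= 1 - t)); last by lra.
  have := normr_ge0 (1 - g); nra.
- move: hb; rewrite !ler_norml => /andP [hb1 hb2]; apply/andP; split.
  + rewrite /qb in hb1 *.
    move: (lin (- 2 * r - (2 - g)) (1 - g * phi) _ _ htt ht1) => H.
    have := H ltac:(lra) ltac:(lra); lra.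
  + rewrite /qb in hb2 *.
    move: (lin (2 - g - 2 * r) (- 1 + g * phi) _ _ htt ht1) => H.
    have := H ltac:(lra) ltac:(lra); lra.
- rewrite -[r in _ * r]ger0_norm // -normrM.
  move: hbr; rewrite -[r in _ * r]ger0_norm // -normrM.
  rewrite !ler_norml => /andP [hb1 hb2]; apply/andP; split.
  + rewrite /qb /qc in hb1 *.
    move: (lin (- (2 - g) * r - (1 - g) - r ^+ 2) (r - g * phi * r + (1 - g)) _ _ htt ht1) => H.
    have := H ltac:(nra) ltac:(nra); nra.
  + rewrite /qb /qc in hb2 *.
    move: (lin ((2 - g) * r - (1 - g) - r ^+ 2) (- r + g * phi * r + (1 - g)) _ _ htt ht1) => H.
    have := H ltac:(nra) ltac:(nra); nra.
Qed.

Lemma fsym (phi a b : R) : fmod phi a b = fmod phi b a.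
Proof.
rewrite !fmodF /qb /qc; congr F; ring.
Qed.

End Aux.

Theorem mainTheorem12 (R : rcfType) (phi : R) (hphi0 : 0 < phi) (hphi1 : phi < 1) :
  let f := fmod phi in
  (* (1) monotonicity on (0,1]^2 and the minimum at (1,1) *)
  ((forall g1 a b : R, 0 < g1 <= 1 -> 0 < a -> a <= b -> b <= 1 -> f g1 b <= f g1 a) /\
   (forall g2 a b : R, 0 < g2 <= 1 -> 0 < a -> a <= b -> b <= 1 -> f b g2 <= f a g2) /\
   (forall g1 g2 : R, 0 < g1 <= 1 -> 0 < g2 <= 1 -> f 1 1 <= f g1 g2)) /\
  (* (2) *)
  ((forall g2 a b : R, 1 <= g2 -> 0 < a -> a <= b -> b <= 1 -> f b g2 <= f a g2) /\
   (forall g1 a b : R, 1 <= g1 -> 0 < a -> a <= b -> b <= 1 -> f g1 b <= f g1 a) /\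
   (forall g1 g2 : R, 0 < g1 <= 1 -> 1 <= g2 -> f 1 g2 <= f g1 g2) /\
   (forall g1 g2 : R, 1 <= g1 -> 0 < g2 <= 1 -> f g1 1 <= f g1 g2)).
Proof.
move=> f.
have hp0 : 0 <= phi by lra.
have hp1 : phi <= 1 by lra.
have m1 : forall g a b : R, 0 <= g -> a <= b -> b <= 1 -> f b g <= f a g.
  by move=> g a b hg hab hb1; apply: mono.
have m2 : forall g a b : R, 0 <= g -> a <= b -> b <= 1 -> f g b <= f g a.
  by move=> g a b hg hab hb1; rewrite /f (fsym _ phi g b) (fsym _ phi g a); apply: mono.
split; [split; [|split]|split; [|split; [|split]]].
- move=> g1 a b /andP [h1 h2] *; apply: m2 => //; lra.
- move=> g2 a b /andP [h1 h2] *; apply: m1 => //; lra.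
- move=> g1 g2 /andP [h1 h2] /andP [h3 h4].
  apply: (le_trans (y := f g1 1)).
  + apply: m1 => //; lra.
  + apply: m2 => //; lra.
- move=> g2 a b h1 *; apply: m1 => //; lra.
- move=> g1 a b h1 *; apply: m2 => //; lra.
- move=> g1 g2 /andP [h1 h2] h3; apply: m1 => //; lra.
- move=> g1 g2 h1 /andP [h2 h3]; apply: m2 => //; lra.
Qed.
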